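(* Let $m\ge 1$ and $n_1,\ldots,n_m\ge 2$. Let $I=(i_1,\ldots,i_m)$ and $J=(j_1,\ldots,j_m)$ be multi-indices with $i_k,j_k\in\{1,\ldots,n_k\}$, and let $c\neq 0$ be a complex scalar (with $c$ real when $I=J$, so that $\mathcal{E}^{IJ}(c)$ is Hermitian). If $I=J$, then $\operatorname{hrank}\mathcal{E}^{IJ}(c)=1$. If $I\neq J$, then $\operatorname{hrank}\mathcal{E}^{IJ}(c)=2d$, where $d$ is the number of indices $k\in\{1,\ldots,m\}$ with $i_k\neq j_k$.
   Context: For positive integers $n_1,\ldots,n_m$, $\mathbb{C}^{[n_1,\ldots,n_m]}$ denotes the real vector space of Hermitian tensors, i.e. tensors $\mathcal{H}\in\mathbb{C}^{n_1\times\cdots\times n_m\times n_1\times\cdots\times n_m}$ with $\mathcal{H}_{i_1\ldots i_m j_1\ldots j_m}=\overline{\mathcal{H}_{j_1\ldots j_m i_1\ldots i_m}}$ for all indices. For vectors $v_i\in\mathbb{C}^{n_i}$, $[v_1,\ldots,v_m]_{\otimes h}:=v_1\otimes\cdots\otimes v_m\otimes\overline{v_1}\otimes\cdots\otimes\overline{v_m}$. Every $\mathcal{H}\in\mathbb{C}^{[n_1,\ldots,n_m]}$ can be written as $\mathcal{H}=\sum_{i=1}^r\lambda_i[u_i^1,\ldots,u_i^m]_{\otimes h}$ with $\lambda_i\in\mathbb{R}$, $u_i^j\in\mathbb{C}^{n_j}$ (a Hermitian decomposition); the Hermitian rank $\operatorname{hrank}(\mathcal{H})$ is the smallest such $r$.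 For multi-indices $I,J$ and a scalar $c$, $\mathcal{E}^{IJ}(c)$ is the Hermitian tensor whose $(i_1,\ldots,i_m,j_1,\ldots,j_m)$ entry equals $c$, whose $(j_1,\ldots,j_m,i_1,\ldots,i_m)$ entry equals $\overline{c}$, and all other entries are zero. *)

(* Defs.v *)
From HB Require Import structures.
From mathcomp Require Import all_boot all_order all_algebra.
From mathcomp Require Import complex.
From mathcomp Require Import reals.
Set Implicit Arguments. Unset Strict Implicit. Unset Printing Implicit Defensive.
Import Order.TTheory GRing.Theory Num.Theory.
Local Open Scope ring_scope.

(* Multi-indices (i_1,...,i_m) with i_k in 'I_(n k) (0-based). *)
Definition mindex (m : nat) (n : 'I_m -> nat) :=
  {dffun forall k : 'I_m, 'I_(n k)}.

(* A tensor in C^{n_1 x ... x n_m x n_1 x ... x n_m}: the entry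
   H I J is H_{i_1..i_m j_1..j_m}. *)
Definition tensor (C : Type) (m : nat) (n : 'I_m -> nat) :=
  mindex n -> mindex n -> C.

Definition hermitian_tensor (C : numClosedFieldType) m (n : 'I_m -> nat)
  (H : tensor C n) : Prop :=
  forall I J, H I J = (H J I)^*.

Definition htens (C : numClosedFieldType) m (n : 'I_m -> nat)
  (v : forall k : 'I_m, 'I_(n k) -> C) : tensor C n :=
  fun I J => \prod_(k < m) (v k (I k) * (v k (J k))^*).

Definition has_hdecomp (C : numClosedFieldType) m (n : 'I_m -> nat)
  (H : tensor C n) (r : nat) : Prop :=
  exists (lam : 'I_r -> C) (u : 'I_r -> forall k : 'I_m, 'I_(n k) -> C),
    (forall i, lam i \is Num.real) /\
    forall I J, H I J = \sum_(i < r) lam i * htens (u i) I J.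

Definition hrank_is (C : numClosedFieldType) m (n : 'I_m -> nat)
  (H : tensor C n) (r : nat) : Prop :=
  has_hdecomp H r /\ forall r', has_hdecomp H r' -> (r <= r')%N.

Definition Etensor (C : numClosedFieldType) m (n : 'I_m -> nat)
  (I J : mindex n) (c : C) : tensor C n :=
  fun K L => if (K == I) && (L == J) then c
             else if (K == J) && (L == I) then c^* else 0.

(* Main.v *)
Require Import Defs.
From HB Require Import structures.
From mathcomp Require Import all_boot all_order all_algebra.
From mathcomp Require Import complex.
From mathcomp Require Import reals.
Import Order.TTheory GRing.Theory Num.Theory.
Local Open Scope ring_scope.
From mathcomp Require Import cyclic separable cyclotomic.
From mathcomp Require Import ring.
Lemma prim_root_exists (C : numClosedFieldType) n : (n > 0)%N -> exists z : C, n.-primitive_root z.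
Proof.
pose p : {poly C} := 'X^n - 1; have [r Dp] := closed_field_poly_normal p.
move=> n_gt0; rewrite (monicP _) ?monicXnsubC // scale1r in Dp.
have rn1: all n.-unity_root r by apply/allP=> z; rewrite -root_prod_XsubC -Dp.
have sz_r: (n < (size r).+1)%N.
  by rewrite -(size_prod_XsubC r id) -Dp size_XnsubC.
have [|z] := hasP (has_prim_root n_gt0 rn1 _ sz_r); last by exists z.
by rewrite -separable_prod_XsubC -Dp separable_Xn_sub_1 // pnatr_eq0 -lt0n.
Qed.
Lemma big_mindex (C : comNzRingType) m (n : 'I_m -> nat)
  (f : forall k : 'I_m, 'I_(n k) -> C) :
  \sum_(K : mindex n) \prod_(k < m) f k (K k) = \prod_(k < m) \sum_(a : 'I_(n k)) f k a.
Proof.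
pose T_ := fun k : 'I_m => ('I_(n k) : finType).
transitivity (\prod_(k < m) \sum_(j in tagged_with T_ k) untag 0 (f k) j); last first.
  by apply: eq_bigr => k _; rewrite (big_tag f k).
rewrite bigA_distr_big_dep.
pose P_ := fun k : 'I_m => [ffun a : T_ k => f k a].
transitivity (\sum_(t : fprod T_) \prod_(k in 'I_m) P_ k (t k)).
  rewrite (reindex (@dffun_of_fprod _ T_)); last first.
    by apply/onW_bij/dffun_of_fprod_bij.
  by apply: eq_bigr => t _; apply: eq_bigr => k _; rewrite /P_ !ffunE.
rewrite big_fprod; apply: eq_bigr => g _; apply: eq_bigr => k _.
rewrite /untag; case: eqP => // e; by rewrite ffunE.
Qed.
Section Kill.
Variable C : numClosedFieldType.
Definition qx1 (q : C * C * C * C) := q.1.1.1.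
Definition qx2 (q : C * C * C * C) := q.1.1.2.
Definition qy1 (q : C * C * C * C) := q.1.2.
Definition qy2 (q : C * C * C * C) := q.2.
Definition killq (q : C * C * C * C) (a1 a2 : C) : bool :=
  (qx1 q * a1 + qx2 q * a2 == 0) || (qy1 q * a1^* + qy2 q * a2^* == 0).

Ltac simp0 := rewrite ?(mul0r, mulr0, add0r, addr0, mul1r, mulr1, conjC0, eqxx, orbT, andbT, oner_eq0, orTb, andTb) /=.

Lemma lemA0 (a1 a2 b1 b2 : C) : a1 != 0 -> a2 != 0 ->
  exists q, (qx1 q * qy2 q != 0) && killq q a1 a2 && killq q b1 b2.
Proof.
move=> a1n a2n.
have [b2z|b2n] := eqVneq b2 0.
  exists (a2, -a1, 0, 1); rewrite /killq /qx1 /qx2 /qy1 /qy2 /= b2z.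
  by rewrite [a2 * a1]mulrC mulNr subrr; simp0; rewrite a2n.
have [b1z|b1n] := eqVneq b1 0.
  exists (1, 0, a2^*, -a1^*); rewrite /killq /qx1 /qx2 /qy1 /qy2 /= b1z.
  by rewrite mulNr [a2^* * _]mulrC subrr; simp0; rewrite oppr_eq0 conjC_eq0 a1n.
exists (a2, -a1, b2^*, -b1^*); rewrite /killq /qx1 /qx2 /qy1 /qy2 /=.
rewrite mulf_neq0 ?oppr_eq0 ?conjC_eq0 //=.
  by rewrite mulNr [a2 * a1]mulrC subrr !mulNr [b2^* * b1^*]mulrC subrr; simp0.
Qed.

Lemma lemA (a1 a2 b1 b2 : C) :
  exists q, (qx1 q * qy2 q != 0) && killq q a1 a2 && killq q b1 b2.
Proof.
case: (boolP ((a1 != 0) && (a2 != 0))) => [/andP[a1n a2n]|].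
  by apply: lemA0.
case: (boolP ((b1 != 0) && (b2 != 0))) => [/andP[b1n b2n]|].
  move=> _; have [q /andP[/andP[H1 H2] H3]] := lemA0 b1 b2 a1 a2 b1n b2n.
  by exists q; rewrite H1 H2 H3.
rewrite !negb_and !negbK => hb ha.
exists (1, 0, 0, 1); rewrite /killq /qx1 /qx2 /qy1 /qy2 /=; simp0.
rewrite !conjC_eq0.
by case/orP: ha => ->; case/orP: hb => ->; rewrite ?orbT.
Qed.

Lemma lemB (a1 a2 : C) :
  exists q, (qx1 q * qy2 q != 0) && (qx2 q * qy1 q == 0) && killq q a1 a2.
Proof.
case: (boolP ((a1 != 0) && (a2 != 0))) => [/andP[a1n a2n]|].
  exists (a2, -a1, 0, 1); rewrite /killq /qx1 /qx2 /qy1 /qy2 /=.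
  by simp0; rewrite mulNr [a2 * a1]mulrC subrr a2n eqxx.
rewrite !negb_and !negbK => ha.
exists (1, 0, 0, 1); rewrite /killq /qx1 /qx2 /qy1 /qy2 /=; simp0.
rewrite !conjC_eq0.
by case/orP: ha => ->; rewrite ?orbT.
Qed.
End Kill.
Arguments lemA {C}.
Arguments lemB {C}.
Arguments qx1 {C}.
Arguments qx2 {C}.
Arguments qy1 {C}.
Arguments qy2 {C}.
Arguments killq {C}.
Lemma prod_bool (C : comNzRingType) m (b : 'I_m -> bool) :
  \prod_(k < m) (b k)%:R = [forall k, b k]%:R :> C.
Proof.
case: (boolP [forall k, b k]) => [/forallP H | /forallPn [k Hk]].
  by rewrite big1 // => k _; rewrite H.
by rewrite (bigD1 k) //= (negbTE Hk) mul0r.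
Qed.

Lemma mindex_eqE m (n : 'I_m -> nat) (K L : mindex n) :
  [forall k, K k == L k] = (K == L).
Proof.
apply/forallP/eqP => [H|-> k //]; apply/ffunP => k; exact/eqP.
Qed.

Lemma hrank_diag (R : realType) (m : nat) (n : 'I_m -> nat)
  (I : mindex n) (c : R[i]) : c != 0 -> c \is Num.real ->
  hrank_is (Etensor I I c) 1.
Proof.
move=> c0 cr; split.
  exists (fun _ => c), (fun _ k a => (a == I k)%:R); split => // K L.
  rewrite big_ord1 /htens /Etensor.
  under eq_bigr => k _ do rewrite conjC_nat -natrM mulnb.
  rewrite prod_bool.
  have -> : [forall k, (K k == I k) && (L k == I k)] = (K == I) && (L == I).
    by rewrite -!mindex_eqE; apply/forallP/andP => [H|[/forallP H1 /forallP H2] k];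
      [split; apply/forallP => k; case/andP: (H k) | rewrite H1 H2].
  by case: ((K == I) && (L == I)); rewrite ?mulr1 ?mulr0.
move=> [|r'] // [lam [u [_ H]]].
by move: (H I I); rewrite big_ord0 /Etensor !eqxx /= => /eqP; rewrite (negbTE c0).
Qed.

Lemma sum_two (C : comNzRingType) N (f : 'I_N -> C) (p q : 'I_N) (x y : C) :
  p != q ->
  \sum_a f a * (if a == p then x else if a == q then y else 0) = f p * x + f q * y.
Proof.
move=> pq; rewrite (bigD1 p) //= eqxx (bigD1 q) 1?eq_sym //= eqxx (negbTE pq).
by rewrite big1 ?addr0 // => a /andP[ap aq]; rewrite (negbTE ap) (negbTE aq) mulr0.
Qed.

Lemma E_contract (C : numClosedFieldType) m (n : 'I_m -> nat) (I J : mindex n) (c : C)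
  (w : mindex n -> mindex n -> C) : I != J ->
  \sum_K \sum_L Etensor I J c K L * w K L = c * w I J + c^* * w J I.
Proof.
move=> IJ.
have h1 : \sum_L Etensor I J c I L * w I L = c * w I J.
  rewrite (bigD1 J) //= big1 ?addr0; last first.
    by move=> L LJ; rewrite /Etensor eqxx (negbTE LJ) /= (negbTE IJ) /= mul0r.
  by rewrite /Etensor !eqxx.
have h2 : \sum_L Etensor I J c J L * w J L = c^* * w J I.
  rewrite (bigD1 I) //= big1 ?addr0; last first.
    by move=> L LI; rewrite /Etensor eqxx (negbTE LI) /= eq_sym (negbTE IJ) mul0r.
  by rewrite /Etensor eq_sym (negbTE IJ) !eqxx.
rewrite (bigD1 I) //= h1 (bigD1 J) 1?eq_sym //= h2 big1 ?addr0 //.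
move=> K /andP[KJ KI]; rewrite big1 // => L _.
by rewrite /Etensor (negbTE KI) (negbTE KJ) mul0r.
Qed.

From mathcomp Require Import zify.

Lemma lower_bound (R : realType) m (n : 'I_m -> nat) (I J : mindex n) (c : R[i]) r
  (lam : 'I_r -> R[i]) (u : 'I_r -> forall k, 'I_(n k) -> R[i]) :
  (0 < m)%N -> I != J -> c != 0 ->
  (forall K L, Etensor I J c K L = \sum_(i < r) lam i * htens (u i) K L) ->
  (2 * #|[set k | I k != J k]| <= r)%N.
Proof.
move=> m0 IJ c0 H; rewrite leqNgt; apply/negP => rlt.
set D := [set k | I k != J k] in rlt *.
set es := enum D.
have sz : size es = #|D| by rewrite cardE.
pose k0 := Ordinal m0.
pose uu (s : nat) (k : 'I_m) (a : 'I_(n k)) : R[i] :=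
  if (insub s : option 'I_r) is Some i then u i k a else 0.
pose quad (k : 'I_m) : R[i] * R[i] * R[i] * R[i] :=
  if k \in D then
    if (2 * index k es + 1 < r)%N then
      xchoose (lemA (uu (2 * index k es)%N k (I k)) (uu (2 * index k es)%N k (J k))
                    (uu (2 * index k es + 1)%N k (I k)) (uu (2 * index k es + 1)%N k (J k)))
    else xchoose (lemB (uu (2 * index k es)%N k (I k)) (uu (2 * index k es)%N k (J k)))
  else (1, 0, 1, 0).
have hq1 : forall k, k \in D ->
  [/\ qx1 (quad k) * qy2 (quad k) != 0,
      killq (quad k) (uu (2 * index k es)%N k (I k)) (uu (2 * index k es)%N k (J k)) &
      (2 * index k es + 1 < r)%N ->
      killq (quad k) (uu (2 * index k es + 1)%N k (I k)) (uu (2 * index k es + 1)%N k (J k))].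
  move=> k kD; rewrite /quad kD; case: ifP => h.
    by case/andP: (xchooseP (lemA (uu (2 * index k es)%N k (I k)) (uu (2 * index k es)%N k (J k))
                    (uu (2 * index k es + 1)%N k (I k)) (uu (2 * index k es + 1)%N k (J k))))
       => /andP[-> ->] ->.
  by case/andP: (xchooseP (lemB (uu (2 * index k es)%N k (I k)) (uu (2 * index k es)%N k (J k))))
       => /andP[-> _] ->.
have hq2 : forall k, k \in D -> ~~ (2 * index k es + 1 < r)%N ->
    qx2 (quad k) * qy1 (quad k) == 0.
  move=> k kD h; rewrite /quad kD (negbTE h).
  by case/andP: (xchooseP (lemB (uu (2 * index k es)%N k (I k)) (uu (2 * index k es)%N k (J k))))
       => /andP[_ ->].
pose X k (a : 'I_(n k)) : R[i] :=
  if a == I k then qx1 (quad k) else if a == J k then qx2 (quad k) else 0.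
pose Y k (a : 'I_(n k)) : R[i] :=
  if a == I k then qy1 (quad k) else if a == J k then qy2 (quad k) else 0.
pose w (K L : mindex n) := (\prod_k X k (K k)) * (\prod_k Y k (L k)).
have HE := @E_contract _ _ _ I J c w IJ.
have HR : \sum_K \sum_L Etensor I J c K L * w K L =
   \sum_(i < r) lam i * ((\prod_k \sum_a u i k a * X k a) *
                         (\prod_k \sum_a (u i k a)^* * Y k a)).
  transitivity (\sum_K \sum_L \sum_(i < r) lam i * (htens (u i) K L * w K L)).
    apply: eq_bigr => K _; apply: eq_bigr => L _; rewrite H big_distrl.
    by apply: eq_bigr => i _; rewrite mulrA.
  under eq_bigr => K _ do rewrite exchange_big.
  rewrite exchange_big; apply: eq_bigr => i _.
  rewrite -!big_mindex big_distrlr big_distrr; apply: eq_bigr => K _.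
  rewrite big_distrr; apply: eq_bigr => L _.
  by rewrite /htens /w !big_split /= mulrACA.
have Hz : forall i : 'I_r, (\prod_k \sum_a u i k a * X k a) *
                         (\prod_k \sum_a (u i k a)^* * Y k a) = 0.
  move=> i; have hi := odd_double_half i; rewrite -muln2 in hi.
  have ir := ltn_ord i.
  set p := i./2 in hi.
  have ip : (p < #|D|)%N by lia.
  set k := nth k0 es p.
  have kD : k \in D by rewrite -mem_enum mem_nth // sz.
  have kpos : index k es = p by rewrite index_uniq ?enum_uniq ?sz.
  have IJk : I k != J k by move: kD; rewrite /D inE.
  have [hx hka hkb] := hq1 k kD; rewrite kpos in hka hkb.
  have : killq (quad k) (u i k (I k)) (u i k (J k)).
    case: (boolP (odd i)) => oi.
      rewrite oi /= in hi.
      have e : (2 * p + 1 = i)%N by lia.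
      have := hkb; rewrite e => /(_ ir); by rewrite /uu valK.
    rewrite (negbTE oi) /= in hi.
    have e : (2 * p = i)%N by lia.
    by move: hka; rewrite e /uu valK.
  rewrite /killq => /orP[hk|hk].
    have ha : \sum_a u i k a * X k a = 0.
      by rewrite /X sum_two // mulrC [u i k (J k) * _]mulrC; exact/eqP.
    by rewrite (bigD1 k) //= ha !mul0r.
  have hb : \sum_a (u i k a)^* * Y k a = 0.
    by rewrite /Y sum_two // mulrC [(u i k (J k))^* * _]mulrC; exact/eqP.
  by rewrite [X in _ * X](bigD1 k) //= hb mul0r mulr0.
rewrite HR big1 in HE; last by move=> i _; rewrite Hz mulr0.
have wJI : w J I = 0.
  have dpos : (0 < #|D|)%N by lia.
  set kf := nth k0 es #|D|.-1.
  have kD : kf \in D by rewrite -mem_enum mem_nth // sz; lia.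
  have kpos : index kf es = #|D|.-1 by rewrite index_uniq ?enum_uniq ?sz //; lia.
  have IJk : I kf != J kf by move: kD; rewrite /D inE.
  have := hq2 kf kD; rewrite kpos => /(_ ltac:(lia)); rewrite mulf_eq0 => /orP[h|h].
    rewrite /w (bigD1 kf) //= /X eq_sym (negbTE IJk) eqxx (eqP h).
    by rewrite !mul0r.
  rewrite /w [X in _ * X](bigD1 kf) //= /Y eqxx (eqP h).
  by rewrite mul0r mulr0.
have wIJ : w I J != 0.
  rewrite mulf_neq0 //; apply/prodf_neq0 => k _.
    rewrite /X eqxx; case: (boolP (k \in D)) => kD.
      by have [hx _ _] := hq1 k kD; move: hx; rewrite mulf_eq0 negb_or => /andP[].
    by rewrite /quad (negbTE kD) /qx1 /= oner_eq0.
  rewrite /Y; case: (eqVneq (J k) (I k)) => e.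
    have kD : k \notin D by rewrite /D inE e eqxx.
    by rewrite /quad (negbTE kD) /qy1 /= oner_eq0.
  have kD : k \in D by rewrite /D inE eq_sym e.
  by have [hx _ _] := hq1 k kD; move: hx; rewrite mulf_eq0 negb_or eqxx => /andP[].
move: HE; rewrite wJI mulr0 addr0 => /esym/eqP; rewrite mulf_eq0 (negbTE c0) /=.
by rewrite (negbTE wIJ).
Qed.

Lemma geom_root (C : fieldType) (z : C) N : z ^+ N = 1 -> z != 1 ->
  \sum_(t < N) z ^+ t = 0.
Proof.
move=> zN z1; have := subrX1 z N; rewrite zN subrr => /esym/eqP.
by rewrite mulf_eq0 subr_eq0 (negbTE z1) => /eqP.
Qed.

Lemma sum_bool_full m (b c : 'I_m -> bool) :
  (\sum_k ((b k && c k) : nat) = \sum_k (b k : nat))%N -> forall k, b k -> c k.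
Proof.
move=> hs k bk; apply/negPn/negP => ck.
have h1 : (\sum_(j | j != k) ((b j && c j) : nat) <= \sum_(j | j != k) (b j : nat))%N.
  by apply: leq_sum => j _; case: (b j); case: (c j).
move: hs; rewrite (bigD1 k) //= [X in _ = X](bigD1 k) //= bk (negbTE ck) /= add0n => e.
by move: h1; rewrite e add1n ltnn.
Qed.

Lemma sum_bool_zero m (b c : 'I_m -> bool) :
  (\sum_k ((b k && c k) : nat) = 0)%N -> forall k, b k -> ~~ c k.
Proof.
move=> /eqP; rewrite sum_nat_eq0 => /forallP hs k bk; apply/negP => ck.
by have := hs k; rewrite bk ck.
Qed.

Lemma sum_bool_le m (b c : 'I_m -> bool) :
  (\sum_k ((b k && c k) : nat) <= \sum_k (b k : nat))%N.
Proof. by apply: leq_sum => j _; case: (b j); case: (c j). Qed.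

Lemma sum_bool_card m (D : {set 'I_m}) :
  (\sum_k ((k \in D) : nat))%N = #|D|.
Proof. by rewrite -sum1_card [RHS]big_mkcond; apply: eq_bigr => k _; case: (k \in D). Qed.
Lemma arith d a b : (0 < d)%N -> (a <= d)%N -> (b <= d)%N ->
  (2 * d %| d + (a + (2 * d).-1 * b))%N -> (a = 0 /\ b = d) \/ (a = d /\ b = 0).
Proof.
move=> d0 ad bd /dvdnP [q hq].
have e : ((2 * d).-1 * b + b = 2 * d * b)%N.
  by rewrite -mulSnr prednK //; lia.
case: (leqP q b) => hqb.
  have : (q * (2 * d) <= b * (2 * d))%N by rewrite leq_mul2r hqb orbT.
  lia.
have : ((b + 1) * (2 * d) <= q * (2 * d))%N by rewrite leq_mul2r addn1 hqb orbT.
lia.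
Qed.

Lemma upper_bound (R : realType) m (n : 'I_m -> nat) (I J : mindex n) (c : R[i]) :
  I != J -> has_hdecomp (Etensor I J c) (2 * #|[set k | I k != J k]|).
Proof.
move=> IJ.
set D := [set k | I k != J k]; set d := #|D|.
have [k1 k1D] : exists k1, k1 \in D.
  move: IJ; rewrite -mindex_eqE => /forallPn [k hk]; by exists k; rewrite /D inE.
have dpos : (0 < d)%N by rewrite /d card_gt0; apply/set0Pn; exists k1.
set N := (2 * d)%N.
have [w wp] := @prim_root_exists R[i] N ltac:(lia).
have wN : w ^+ N = 1 := prim_expr_order wp.
have w0 : w != 0.
  by apply/negP => /eqP w0; move: wN; rewrite w0 expr0n; case: (N) (ltac:(lia) : (0 < N)%N) => // ? _ /eqP; rewrite eq_sym oner_eq0.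
have wd : w ^+ d = -1.
  have : (w ^+ d) ^+ 2 == 1 by rewrite -exprM mulnC wN.
  rewrite sqrf_eq1 => /orP[h|/eqP //].
  by move: h; rewrite -(prim_order_dvd wp) /N => /dvdn_leq => /(_ dpos); lia.
have wc : w^* = w ^+ N.-1.
  have nw : `|w| = 1.
    apply/eqP; rewrite -(@pexpr_eq1 _ _ N) ?normr_ge0 //; last by lia.
    by rewrite -normrX wN normr1.
  apply: (mulfI w0); rewrite -exprS prednK ?wN; last by lia.
  by rewrite -normCK nw expr1n.
pose psi k : R[i] := if k == k1 then c^* else 1.
pose g k (a : 'I_(n k)) : R[i] :=
  if k \in D then (if a == I k then 1 else if a == J k then psi k else 0)
  else (if a == I k then 1 else 0).
pose e k (a : 'I_(n k)) : nat := ((k \in D) && (a == J k)).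
exists (fun t : 'I_N => (-1) ^+ t / N%:R), (fun t k a => g k a * w ^+ (t * e k a)).
split.
  by move=> t; rewrite rpredM ?rpredV ?rpredX ?rpredN ?rpred1 ?realn.
move=> K L.
pose G := \prod_k (g k (K k) * (g k (L k))^*).
pose S := (\sum_k e k (K k) + N.-1 * \sum_k e k (L k))%N.
have Ht : forall t : 'I_N,
    htens (fun k a => g k a * w ^+ (t * e k a)) K L = G * (w ^+ S) ^+ t.
  move=> t; rewrite /htens /G.
  transitivity (\prod_k ((g k (K k) * (g k (L k))^*) *
                  (w ^+ t) ^+ (e k (K k) + N.-1 * e k (L k)))).
    apply: eq_bigr => k _; rewrite rmorphM /= rmorphXn /= wc -!exprM.
    by rewrite mulrACA -exprD mulnDr mulnCA.
  rewrite big_split /= prodrXr -!exprM /S; congr (_ * w ^+ _).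
  by rewrite mulnC big_split /= -big_distrr.
have N0 : (N%:R : R[i]) != 0 by rewrite pnatr_eq0; lia.
have Hs : \sum_(t < N) (-1) ^+ t / N%:R *
            htens (fun k a => g k a * w ^+ (t * e k a)) K L =
          G * (if (N %| d + S)%N then 1 else 0).
  have e1 : forall t : 'I_N, (w ^+ d) ^+ t / N%:R * (G * (w ^+ S) ^+ t) =
      G / N%:R * (w ^+ (S + d)) ^+ t.
    by move=> t; rewrite exprD exprMn; ring.
  under eq_bigr => t _ do rewrite Ht -wd e1.
  rewrite -big_distrr /=.
  case: ifP => h.
    have -> : w ^+ (S + d) = 1 by apply/eqP; rewrite -(prim_order_dvd wp) addnC.
    under eq_bigr => t _ do rewrite expr1n.
    by rewrite sumr_const card_ord -mulr_natr mulr1 mul1r divfK.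
  rewrite (@geom_root _ (w ^+ (S + d)) N) ?mulr0 ?mul0r //.
    by rewrite exprAC wN expr1n.
  by rewrite -(prim_order_dvd wp) addnC h.
rewrite Hs.
have heI : forall k, e k (I k) = 0%N.
  move=> k; rewrite /e; case kD: (k \in D) => //=.
  by move: kD; rewrite /D inE => /negbTE ->.
have heJ : forall k, e k (J k) = (k \in D) by move=> k; rewrite /e eqxx andbT.
have hgI : forall k, g k (I k) = 1 by move=> k; rewrite /g eqxx; case: (k \in D).
have nDk : forall k, k \notin D -> (J k == I k) && (k != k1).
  move=> k kD; move: (kD); rewrite /D inE negbK eq_sym => -> /=.
  by apply/eqP => ek; move: kD; rewrite ek k1D.
have hG1 : forall k, g k (I k) * (g k (J k))^* = if k == k1 then c else 1.
  move=> k; rewrite hgI mul1r /g; case: (boolP (k \in D)) => kD.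
    move: (kD); rewrite /D inE eq_sym => /negbTE ->; rewrite eqxx /psi.
    by case: (k == k1); rewrite ?conjCK ?conjC1.
  by case/andP: (nDk k kD) => /eqP -> /negbTE ->; rewrite eqxx conjC1.
have hG2 : forall k, g k (J k) * (g k (I k))^* = if k == k1 then c^* else 1.
  move=> k; rewrite hgI conjC1 mulr1 /g; case: (boolP (k \in D)) => kD.
    move: (kD); rewrite /D inE eq_sym => /negbTE ->; rewrite eqxx /psi.
    by case: (k == k1).
  by case/andP: (nDk k kD) => /eqP -> /negbTE ->; rewrite eqxx.
have hP : forall x : R[i], \prod_(k < m) (if k == k1 then x else 1) = x.
  by move=> x; rewrite (bigD1 k1) //= eqxx big1 ?mulr1 // => k /negbTE ->.
have hsI : (\sum_k e k (I k) = 0)%N by rewrite big1.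
have hsJ : (\sum_k e k (J k) = d)%N.
  by rewrite /d -sum_bool_card; apply: eq_bigr => k _; rewrite heJ.
have hdd : (N %| d + (0 + N.-1 * d))%N.
  by apply/dvdnP; exists d; rewrite /N; lia.
have hdd2 : (N %| d + (d + N.-1 * 0))%N.
  by apply/dvdnP; exists 1%N; rewrite /N; lia.
case h1: ((K == I) && (L == J)).
  case/andP: h1 => /eqP eK /eqP eL.
  rewrite /S /G eK eL hsI hsJ hdd mulr1 /Etensor !eqxx /=.
  by under eq_bigr => k _ do rewrite hG1; rewrite hP.
case h2: ((K == J) && (L == I)).
  case/andP: h2 => /eqP eK /eqP eL.
  rewrite /S /G eK eL hsI hsJ hdd2 mulr1 /Etensor !eqxx /= eq_sym (negbTE IJ) /=.
  by under eq_bigr => k _ do rewrite hG2; rewrite hP.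
rewrite /Etensor h1 h2; case: ifP => hd; last by rewrite mulr0.
rewrite mulr1; apply/esym/eqP; apply/negPn/negP => /prodf_neq0 hG.
have hgnz : forall kk (aa : 'I_(n kk)), g kk aa != 0 -> (aa == I kk) || ((kk \in D) && (aa == J kk)).
  move=> kk aa; rewrite /g; case: (kk \in D); case: (aa == I kk);
    case: (aa == J kk); by rewrite ?eqxx.
have gK : forall k, (K k == I k) || ((k \in D) && (K k == J k)).
  by move=> k; apply: hgnz; have := hG k isT; rewrite mulf_eq0 negb_or => /andP[].
have gL : forall k, (L k == I k) || ((k \in D) && (L k == J k)).
  move=> k; apply: hgnz; have := hG k isT; rewrite mulf_eq0 negb_or conjC_eq0.
  by case/andP.
have bK : (\sum_k e k (K k) <= d)%N by rewrite /d -sum_bool_card sum_bool_le.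
have bL : (\sum_k e k (L k) <= d)%N by rewrite /d -sum_bool_card sum_bool_le.
have [[hK hL]|[hK hL]] := arith _ _ _ dpos bK bL hd.
  have eK : K = I.
    apply/eqP; rewrite -mindex_eqE; apply/forallP => k.
    case/orP: (gK k) => // /andP[kD hk].
    by have := sum_bool_zero _ _ _ hK _ kD; rewrite hk.
  have eL : L = J.
    apply/eqP; rewrite -mindex_eqE; apply/forallP => k.
    case: (boolP (k \in D)) => kD.
      apply: (@sum_bool_full m (fun k => k \in D) (fun k => L k == J k) _ k kD).
      by rewrite sum_bool_card; exact: hL.
    case/orP: (gL k) => [/eqP ->|/andP[]]; last by rewrite (negbTE kD).
    by case/andP: (nDk k kD) => /eqP ->.
  by move: h1; rewrite eK eL !eqxx.
have eK : K = J.
  apply/eqP; rewrite -mindex_eqE; apply/forallP => k.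
  case: (boolP (k \in D)) => kD.
    apply: (@sum_bool_full m (fun k => k \in D) (fun k => K k == J k) _ k kD).
    by rewrite sum_bool_card; exact: hK.
  case/orP: (gK k) => [/eqP ->|/andP[]]; last by rewrite (negbTE kD).
  by case/andP: (nDk k kD) => /eqP ->.
have eL : L = I.
  apply/eqP; rewrite -mindex_eqE; apply/forallP => k.
  case/orP: (gL k) => // /andP[kD hk].
  by have := sum_bool_zero _ _ _ hL _ kD; rewrite hk.
by move: h2; rewrite eK eL !eqxx.
Qed.

Theorem theorem2p3 (R : realType) (m : nat) (n : 'I_m -> nat)
  (I J : mindex n) (c : R[i]) :
  (1 <= m)%N -> (forall k, (2 <= n k)%N) -> c != 0 ->
  (I = J -> c \is Num.real) ->
  (I = J -> hrank_is (Etensor I J c) 1) /\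
  (I != J -> hrank_is (Etensor I J c) (2 * #|[set k | I k != J k]|)).
Proof.
move=> m1 _ c0 hr; split.
  by move=> IJ; move: (hr IJ); subst J => cr; apply: hrank_diag.
move=> IJ; split; first exact: upper_bound.
move=> r' [lam [u [_ H]]].
exact: (lower_bound _ _ _ _ _ _ _ lam u m1 IJ c0 H).
Qed.
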